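(* Let $W=\{w_1,\dots,w_n\}$, $F=\{f_1,\dots,f_m\}$, let $\succcurlyeq$ be a preference profile and $\bm r=(r_1,\dots,r_{n+m})$ a ranking of $W\cup F$. If the tensors $\mathbf P_W,\mathbf P_F$ and the matrix $\bm R$ are defined from $\succcurlyeq$ and $\bm r$ as below, then $\mathrm{TSD}(\mathbf P_W,\mathbf P_F,\bm R)$ equals the matching matrix of the matching produced by serial dictatorship with ranking $\bm r$ on $\succcurlyeq$.
   Context: Preferences: each worker has a linear order $\succcurlyeq_{w_i}$ on $\overline F=F\cup\{\perp\}$, each firm a linear order $\succcurlyeq_{f_j}$ on $\overline W=W\cup\{\perp\}$ ($\perp$ = unmatched). For $x\in\overline F$, $\mathrm{ord}(x,\succcurlyeq_{w_i})=\#\{x'\in\overline F: x'\succcurlyeq_{w_i}x\}$ (position, $1$ = best); similarly for firms. Serial dictatorship (SD) with ranking $\bm r$: for $k=1,\dots,n+m$, if $r_k$ is not yet matched, $r_k$ is assigned its most preferred option among $\perp$ and the not-yet-matched agents of the other side (that agent, if any, becomes matched with $r_k$). The matching matrix $\bm M\in\{0,1\}^{(n+1)\times(m+1)}$ of a matching has $M_{ij}=1$ iff $w_i$ is matched with $f_j$ ($i\le n,j\le m$), $M_{i,m+1}=1$ iff $w_i$ is unmatched, $M_{n+1,j}=1$ iff $f_j$ is unmatched, $M_{n+1,m+1}=0$, all other entries $0$. Inputs: $\mathbf P_W=[\bm P_{w_1},\dots,\bm P_{w_n}]\in\{0,1\}^{n\times(m+1)\times(m+1)}$ with $(\bm P_{w_i})_{j,k}=1$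 iff ($j\le m$ and $\mathrm{ord}(f_j,\succcurlyeq_{w_i})=k$) or ($j=m+1$ and $\mathrm{ord}(\perp,\succcurlyeq_{w_i})=k$); $\mathbf P_F=[\bm P_{f_1},\dots,\bm P_{f_m}]\in\{0,1\}^{m\times(n+1)\times(n+1)}$ defined analogously with rows indexed by $w_1,\dots,w_n,\perp$; $\bm R\in\{0,1\}^{(n+m)\times(n+m)}$ with $R_{i,k}=1$ iff ($i\le n$ and $r_k=w_i$) or ($i>n$ and $r_k=f_{i-n}$). Subroutine FindCounterpart$(\bm P)$ for $\bm P\in\mathbb R^{p\times q}$: let $c_j=\sum_i P_{ij}$, replace $c$ by its cumulative sum $(\sum_{l\le j}c_l)_j$, apply elementwise $\mathrm{tw}(x)=0$ if $x\le0$, $x$ if $0<x\le1$, $2-x$ if $1<x\le2$, $0$ if $x>2$, and return the column vector $\bm P\bm c^\top\in\mathbb R^{p}$. Masks: for $k\in[n+m]$, $\bm U_W^{(k)}\in\mathbb R^{(m+1)\times(m+1)}$ is $\sum_{r=n+1}^{n+m}R_{r,k}\bm E^{(m+1)}_{r-n}$ and $\bm U_F^{(k)}\in\mathbb R^{(n+1)\times(n+1)}$ is $\sum_{r=1}^nR_{r,k}\bm E^{(n+1)}_r$, where $\bm E^{(s)}_t$ is the $s\times s$ matrix whose $t$-th row is all $-1$ and other entries $0$. TSD: set $\bm M=\bm O_{(n+1)\times(m+1)}$. For $k=1,\dots,n+m$: (1) $\bm d_w=(R_{1,k},\dots,R_{n,k})$, $\bm d_f=(R_{n+1,k},\dots,R_{n+m,k})$;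 (2) $\bm P_w=\sum_i(\bm d_w)_i\bm P_{w_i}$, $\bm P_f=\sum_j(\bm d_f)_j\bm P_{f_j}$ (current tensors); (3) $\bm c_w=$FindCounterpart$(\bm P_w)\in\mathbb R^{m+1}$, $\bm c_f=$FindCounterpart$(\bm P_f)\in\mathbb R^{n+1}$ (as row vectors); (4) $\bm M_w=[\bm d_w\|0]^\top\bm c_w$, $\bm M_f=[\bm d_f\|0]^\top\bm c_f$; (5) $\bm M\leftarrow\bm M+\bm M_w+\bm M_f^\top$; (6) $\bm V_W\in\mathbb R^{(m+1)\times(m+1)}$ has $t$-th row equal to $-(\bm c_w)_t$ times the all-ones row for $t\le m$ and zero row $m+1$; $\bm V_F\in\mathbb R^{(n+1)\times(n+1)}$ analogously from $\bm c_f$; (7) add $\bm U_W^{(k)}+\bm V_W$ to every $\bm P_{w_i}$ and $\bm U_F^{(k)}+\bm V_F$ to every $\bm P_{f_j}$; (8) replace each $\bm P_{w_i}$ by $(1-(\bm c_f)_i)\,\mathrm{ReLU}(\bm P_{w_i})$ and each $\bm P_{f_j}$ by $(1-(\bm c_w)_j)\,\mathrm{ReLU}(\bm P_{f_j})$, with $\mathrm{ReLU}$ elementwise $\max\{x,0\}$. Output $\bm M$. *)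

(* Defs.v *)
From HB Require Import structures.
From mathcomp Require Import all_boot all_order all_algebra.
Set Implicit Arguments. Unset Strict Implicit. Unset Printing Implicit Defensive.
Import Order.TTheory GRing.Theory Num.Theory.
Local Open Scope ring_scope.

(* Workers are 'I_n, firms are 'I_m; "⊥" is None in option types.
   Matrix index conventions (0-based): for 'I_k.+1, index i with
   unlift ord_max i = Some i' denotes agent i', and ord_max denotes ⊥. *)

Definition linear_order (T : finType) (le : rel T) : Prop :=
  [/\ reflexive le, antisymmetric le, transitive le & total le].

(** ord(x, ≽) = #{x' | x' ≽ x}  (1 = best). *)
Definition ord_pos (T : finType) (le : rel T) (x : T) : nat :=
  #|[pred x' | le x' x]|.

(** Most preferred element among those satisfying [avail] (⊥ is always
    available); default ⊥. *)
Definition most_pref (A : finType) (le : rel (option A)) (avail : pred A)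
  : option A :=
  odflt None [pick x : option A |
     (oapp avail true x) && [forall y : option A, oapp avail true y ==> le x y]].

(* state: for each worker / firm, None = not yet matched,
   Some None = unmatched (assigned ⊥), Some (Some p) = matched to p *)
Record sd_state (n m : nat) := SDState {
  sd_w : 'I_n -> option (option 'I_m);
  sd_f : 'I_m -> option (option 'I_n) }.

Definition sd_step (n m : nat) (prefW : 'I_n -> rel (option 'I_m))
  (prefF : 'I_m -> rel (option 'I_n)) (s : sd_state n m)
  (a : 'I_n + 'I_m) : sd_state n m :=
  match a with
  | inl i =>
    if sd_w s i is None then
      let x := most_pref (prefW i) [pred j | sd_f s j == None] in
      SDState (fun i' => if i' == i then Some x else sd_w s i')
              (fun j => if x == Some j then Some (Some i) else sd_f s j)
    else s
  | inr j =>
    if sd_f s j is None then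
      let y := most_pref (prefF j) [pred i | sd_w s i == None] in
      SDState (fun i => if y == Some i then Some (Some j) else sd_w s i)
              (fun j' => if j' == j then Some y else sd_f s j')
    else s
  end.

Definition SD (n m : nat) (prefW : 'I_n -> rel (option 'I_m))
  (prefF : 'I_m -> rel (option 'I_n)) (r : 'I_(n + m) -> 'I_n + 'I_m)
  : sd_state n m :=
  foldl (fun s k => sd_step prefW prefF s (r k))
        (SDState (fun _ => None) (fun _ => None)) (enum 'I_(n + m)).

Definition matching_matrix (R : nzRingType) (n m : nat) (s : sd_state n m)
  : 'M[R]_(n.+1, m.+1) :=
  \matrix_(i, j)
    match unlift ord_max i, unlift ord_max j with
    | Some i', Some j' => (sd_w s i' == Some (Some j'))%:R
    | Some i', None => (~~ [exists j', sd_w s i' == Some (Some j')])%:R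
    | None, Some j' => (~~ [exists i', sd_f s j' == Some (Some i')])%:R
    | None, None => 0
    end.

Definition pref_tensor (R : nzRingType) (A : finType) (k : nat)
  (le : rel (option A)) (to : 'I_k.+1 -> option A) : 'M[R]_k.+1 :=
  \matrix_(j, c) (ord_pos le (to j) == c.+1)%N%:R.

Definition PW_of (R : nzRingType) (n m : nat)
  (prefW : 'I_n -> rel (option 'I_m)) : 'I_n -> 'M[R]_m.+1 :=
  fun i => pref_tensor R (prefW i) (unlift ord_max).

Definition PF_of (R : nzRingType) (n m : nat)
  (prefF : 'I_m -> rel (option 'I_n)) : 'I_m -> 'M[R]_n.+1 :=
  fun j => pref_tensor R (prefF j) (unlift ord_max).

(** R_{i,k} = 1 iff r_k is the agent of row i (rows 0..n-1 workers,
    n..n+m-1 firms) *)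
Definition R_of (R : nzRingType) (n m : nat) (r : 'I_(n + m) -> 'I_n + 'I_m)
  : 'M[R]_(n + m) :=
  \matrix_(i, k) (r k == split i)%:R.

Section TSD.
Variable R : realFieldType.

Definition tw (x : R) : R :=
  if x <= 0 then 0 else if x <= 1 then x else if x <= 2 then 2 - x else 0.

Definition relu (x : R) : R := Num.max x 0.

Definition find_counterpart (p q : nat) (P : 'M[R]_(p, q)) : 'cV[R]_p :=
  P *m \col_(j < q) tw (\sum_(l < q | (l <= j)%N) \sum_(i < p) P i l).

Definition Emat (s : nat) (t : 'I_s) : 'M[R]_s :=
  \matrix_(a, b) (if a == t then -1 else 0).

Definition ext0 (s : nat) (v : 'I_s -> R) : 'rV[R]_s.+1 :=
  \row_(i < s.+1) oapp v 0 (unlift ord_max i).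

Definition Vmat (s : nat) (c : 'rV[R]_s.+1) : 'M[R]_s.+1 :=
  \matrix_(t, b) (if t == ord_max then 0 else - c 0 t).

Record tsd_state (n m : nat) := TSDState {
  ts_PW : 'I_n -> 'M[R]_m.+1;
  ts_PF : 'I_m -> 'M[R]_n.+1;
  ts_M : 'M[R]_(n.+1, m.+1) }.

Definition tsd_step (n m : nat) (Rm : 'M[R]_(n + m)) (s : tsd_state n m)
  (k : 'I_(n + m)) : tsd_state n m :=
  let dw := fun i : 'I_n => Rm (lshift m i) k in
  let df := fun j : 'I_m => Rm (rshift n j) k in
  let Pw := \sum_(i < n) dw i *: ts_PW s i in
  let Pf := \sum_(j < m) df j *: ts_PF s j in
  let cw := (find_counterpart Pw)^T in
  let cf := (find_counterpart Pf)^T in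
  let Mw := (ext0 dw)^T *m cw in
  let Mf := (ext0 df)^T *m cf in
  let UW := \sum_(r < m) Rm (rshift n r) k *: Emat (lift ord_max r) in
  let UF := \sum_(r < n) Rm (lshift m r) k *: Emat (lift ord_max r) in
  let VW := Vmat cw in
  let VF := Vmat cf in
  TSDState
    (fun i => (1 - cf 0 (lift ord_max i)) *: map_mx relu (ts_PW s i + UW + VW))
    (fun j => (1 - cw 0 (lift ord_max j)) *: map_mx relu (ts_PF s j + UF + VF))
    (ts_M s + Mw + Mf^T).

Definition TSD (n m : nat) (PW : 'I_n -> 'M[R]_m.+1) (PF : 'I_m -> 'M[R]_n.+1)
  (Rm : 'M[R]_(n + m)) : 'M[R]_(n.+1, m.+1) :=
  ts_M (foldl (tsd_step Rm) (TSDState PW PF 0) (enum 'I_(n + m))).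

End TSD.

(* Main.v *)
Require Import Defs.
From HB Require Import structures.
From mathcomp Require Import all_boot all_order all_algebra lra.
Set Implicit Arguments. Unset Strict Implicit. Unset Printing Implicit Defensive.
Import Order.TTheory GRing.Theory Num.Theory.
Local Open Scope ring_scope.

Section Ord.
Variables (A : finType) (le : rel A).
Hypothesis Hle : linear_order le.

Lemma lo_refl x : le x x. Proof. by case: Hle => H _ _ _; apply: H. Qed.
Lemma lo_anti x y : le x y -> le y x -> x = y.
Proof. by case: Hle => _ H _ _ a b; apply: H; rewrite a b. Qed.
Lemma lo_trans x y z : le x y -> le y z -> le x z.
Proof. by case: Hle => _ _ H _; apply: H. Qed.
Lemma lo_total x y : le x y || le y x.
Proof. by case: Hle => _ _ _ H; apply: H. Qed.

Lemma ord_lt x y : le x y -> x != y -> (ord_pos le x < ord_pos le y)%N.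
Proof.
move=> hxy nxy; apply: proper_card; apply/properP; split.
  by apply/subsetP=> z; rewrite !inE => hz; apply: lo_trans hxy.
exists y; first by rewrite inE lo_refl.
rewrite inE; apply/negP=> hyx; move/negP: nxy; apply; apply/eqP; exact: lo_anti.
Qed.

Lemma ord_le x y : (ord_pos le x <= ord_pos le y)%N = le x y.
Proof.
case: (eqVneq x y) => [->|nxy]; first by rewrite leqnn lo_refl.
case h: (le x y); first by apply: ltnW; apply: ord_lt.
have hyx : le y x by move: (lo_total x y); rewrite h.
by apply/negbTE; rewrite -ltnNge; apply: ord_lt; rewrite // eq_sym.
Qed.

Lemma ord_inj x y : ord_pos le x = ord_pos le y -> x = y.
Proof. by move=> e; apply: lo_anti; rewrite -ord_le e leqnn. Qed.

Lemma ord_gt0 x : (0 < ord_pos le x)%N.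
Proof. by apply/card_gt0P; exists x; rewrite inE lo_refl. Qed.

Lemma ord_leT x : (ord_pos le x <= #|A|)%N.
Proof. exact: max_card. Qed.
End Ord.

Section MP.
Variables (A : finType) (le : rel (option A)) (avail : pred A).
Hypothesis Hle : linear_order le.
Let av x := oapp avail true x.

Lemma most_prefP : av (most_pref le avail) /\
   forall y, av y -> le (most_pref le avail) y.
Proof.
rewrite /most_pref; case: pickP => [x /andP[Hx /forallP Hy] | H] /=.
  by split=> // y hy; move/implyP: (Hy y); apply.
exfalso.
have [x0 Px0 Hmin] := @arg_minnP _ None av (ord_pos le) isT.
move: (H x0) => /=; rewrite (_ : oapp avail true x0 = true) //= => /negbT/negP; apply.
apply/forallP=> y; apply/implyP=> hy; rewrite -(ord_le Hle); exact: Hmin.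
Qed.

Lemma most_pref_uniq a : av a -> (forall y, av y -> le a y) ->
  a = most_pref le avail.
Proof.
move=> ha hy; have [h1 h2] := most_prefP.
by apply: (lo_anti Hle); [apply: hy | apply: h2].
Qed.
End MP.

Section TW.
Variable R : realFieldType.
Lemma tw_nat (k : nat) : tw (k%:R : R) = (k == 1)%:R.
Proof.
rewrite /tw; case: k => [|[|[|k]]] /=; rewrite ?lexx //.
- by rewrite ler10.
- by rewrite subrr; case: ifP => h; [|case: ifP => h2]; rewrite // ?h; move: h h2; lra.
- have h3 : (3%:R <= k.+3%:R :> R) by rewrite ler_nat.
  have -> : (k.+3%:R <= 0 :> R) = false by apply/negbTE; rewrite -ltNge; lra.
  have -> : (k.+3%:R <= 1 :> R) = false by apply/negbTE; rewrite -ltNge; lra.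
  have -> : (k.+3%:R <= 2 :> R) = false by apply/negbTE; rewrite -ltNge; lra.
  by [].
Qed.
End TW.

Section FC.
Variables (R : realFieldType) (k : nat) (le : rel (option 'I_k)) (avail : pred 'I_k).
Hypothesis Hle : linear_order le.
Local Notation to := (unlift (@ord_max k)).

Definition RP : 'M[R]_k.+1 :=
  \matrix_(a, c) ((oapp avail true (to a)) && (ord_pos le (to a) == c.+1)%N)%:R.

Lemma to_surj y : to (oapp (lift ord_max) ord_max y) = y.
Proof. by case: y => [j|] /=; rewrite ?liftK ?unlift_none. Qed.

Lemma to_inj : injective to.
Proof.
move=> a b; case: unliftP => [j ->|->]; case: unliftP => [j' ->|->] //=.
- by move=> [->].
Qed.

Definition oI (b : 'I_k.+1) : 'I_k.+1 := inord (ord_pos le (to b)).-1.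

Lemma ord_bnd b : ((ord_pos le (to b)).-1 < k.+1)%N.
Proof.
have h1 := ord_gt0 Hle (to b); have h2 := ord_leT le (to b).
rewrite card_option card_ord in h2.
by rewrite prednK.
Qed.

Lemma oIE b (c : 'I_k.+1) : (ord_pos le (to b) == c.+1)%N = (c == oI b).
Proof.
have h1 := ord_gt0 Hle (to b).
rewrite /oI; apply/eqP/eqP => [e|->].
  by apply: val_inj; rewrite /= inordK ?ord_bnd // e.
by rewrite inordK ?ord_bnd // prednK.
Qed.

Lemma oI_le a b : (oI b <= oI a)%N = le (to b) (to a).
Proof.
rewrite /oI !inordK ?ord_bnd // -(ord_le Hle).
move: (ord_gt0 Hle (to b)) (ord_gt0 Hle (to a)).
by case: (ord_pos le (to b)) => // x _; case: (ord_pos le (to a)).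
Qed.

Lemma sum_card (T : finType) (P : pred T) : \sum_(i : T) ((P i)%:R : R) = #|P|%:R.
Proof.
rewrite (eq_bigr (fun i => if P i then 1 else 0)); last by move=> i _; case: (P i).
by rewrite -big_mkcond /= sumr_const.
Qed.

Lemma fc_RP : find_counterpart RP = \col_a (to a == most_pref le avail)%:R.
Proof.
apply/matrixP => a z; rewrite !mxE.
rewrite (bigD1 (oI a)) //= big1 ?addr0; last first.
  by move=> c hc; rewrite !mxE oIE (negbTE hc) andbF mul0r.
rewrite !mxE oIE eqxx andbT.
have -> : \sum_(l < k.+1 | (l <= oI a)%N) \sum_i RP i l =
   (#|[pred b | oapp avail true (to b) && le (to b) (to a)]|)%:R.
  rewrite exchange_big /= -sum_card; apply: eq_bigr => i _.
  under eq_bigr do rewrite mxE oIE.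
  case hav: (oapp avail true (to i)); rewrite /= hav /=; last by rewrite big1.
  case h: (oI i <= oI a)%N.
    rewrite (bigD1 (oI i)) //= eqxx big1 ?addr0 -?oI_le ?h //.
    by move=> l /andP[_ /negbTE ->].
  rewrite -oI_le h big1 // => l hl; case: eqP hl => // ->; by rewrite h.
rewrite tw_nat.
have [mpa mpb] := most_prefP avail Hle.
case ha: (oapp avail true (to a)); last first.
  by rewrite mul0r; case: eqP => // e; move: ha; rewrite e mpa.
rewrite mul1r; apply: (congr1 (fun b : bool => (b%:R : R))).
case: (eqVneq (to a) (most_pref le avail)) => [e|ne].
  apply/eqP; apply: (@eq_card1 _ a) => b; rewrite !inE.
  apply/andP/eqP => [[hb lb]|->]; last by rewrite ha lo_refl.
  by apply: to_inj; apply: (lo_anti Hle) => //; rewrite e; apply: mpb.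
apply/negbTE/eqP => hc; move/eqP: ne; apply; apply: most_pref_uniq => // y hy.
case lay: (le (to a) y) => //.
have lya : le y (to a) by move: (lo_total Hle (to a) y); rewrite lay.
set b := oapp (lift ord_max) ord_max y.
have tb : to b = y by apply: to_surj.
have nab : a != b.
  by apply/eqP => e; move: lay; rewrite e tb lo_refl.
have : (#|pred2 a b| <= #|[pred b | oapp avail true (to b) && le (to b) (to a)]|)%N.
  apply: subset_leq_card; apply/subsetP => x; rewrite !inE.
  case/orP => /eqP ->; first by rewrite ha (lo_refl Hle).
  by rewrite tb hy lya.
by rewrite card2 nab hc.
Qed.

End FC.
Section Main.
Variables (R : realFieldType) (n m : nat).
Variables (prefW : 'I_n -> rel (option 'I_m)) (prefF : 'I_m -> rel (option 'I_n)).
Variable (r : 'I_(n + m) -> 'I_n + 'I_m).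
Hypothesis HW : forall i, linear_order (prefW i).
Hypothesis HF : forall j, linear_order (prefF j).
Hypothesis Hr : injective r.

Local Notation Rm := (R_of R r).
Local Notation sstate := (sd_state n m).
Local Notation tstate := (tsd_state R n m).

Definition RW (s : sstate) i : 'M[R]_m.+1 := RP R (prefW i) [pred j | sd_f s j == None].
Definition RF (s : sstate) j : 'M[R]_n.+1 := RP R (prefF j) [pred i | sd_w s i == None].

Definition MM (s : sstate) : 'M[R]_(n.+1, m.+1) :=
  \matrix_(a, b)
    match unlift ord_max a, unlift ord_max b with
    | Some i, Some j => (sd_w s i == Some (Some j))%:R
    | Some i, None => (sd_w s i == Some None)%:R
    | None, Some j => (sd_f s j == Some None)%:R
    | None, None => 0
    end.

Definition Inv (s : sstate) (t : tstate) (done : seq ('I_n + 'I_m)) :=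
 [/\ forall i, sd_w s i = None -> ts_PW t i = RW s i,
     forall i, sd_w s i != None -> inl i \notin done -> ts_PW t i = 0,
     forall j, sd_f s j = None -> ts_PF t j = RF s j,
     forall j, sd_f s j != None -> inr j \notin done -> ts_PF t j = 0 &
     ts_M t = MM s /\
     forall a, a \in done -> match a with inl i => sd_w s i != None | inr j => sd_f s j != None end].

Definition sdf := fun s k => sd_step prefW prefF s (r k).
Definition tsf := tsd_step Rm.

Hypothesis step : forall s t done k, Inv s t done -> r k \notin done ->
  Inv (sdf s k) (tsf t k) (rcons done (r k)).

Lemma fold_inv l s t done : Inv s t done -> uniq (done ++ map r l) ->
  Inv (foldl sdf s l) (foldl tsf t l) (done ++ map r l).
Proof.
elim: l s t done => [|k l IH] s t done /=; first by rewrite cats0.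
move=> hI hu; rewrite -cat_rcons; apply: IH; last by rewrite cat_rcons.
apply: step => //.
by move: hu; rewrite -cat_rcons cat_uniq rcons_uniq => /andP[/andP[]].
Qed.

Lemma inv_init : Inv (SDState (fun _ => None) (fun _ => None))
   (TSDState (PW_of R prefW) (PF_of R prefF) 0) [::].
Proof.
split => //=.
- by move=> i _; apply/matrixP => a c; rewrite !mxE /=; case: (unlift ord_max a).
- by move=> j _; apply/matrixP => a c; rewrite !mxE /=; case: (unlift ord_max a).
split=> //; apply/matrixP => a b; rewrite !mxE.
  by case: (unlift ord_max a) => [i|]; case: (unlift ord_max b).
Qed.

Lemma MM_final s : (forall i, sd_w s i != None) -> (forall j, sd_f s j != None) ->
  MM s = matching_matrix R s.
Proof.
move=> hw hf; apply/matrixP => a b; rewrite !mxE.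
case: (unlift ord_max a) => [i|]; case: (unlift ord_max b) => [j|] //.
- move: (hw i); case: (sd_w s i) => [[j'|]|] //= _.
    by rewrite (_ : [exists _, _] = true) //; apply/existsP; exists j'.
  by rewrite (_ : [exists _, _] = false) //; apply/negbTE/existsP => [[j']].
- move: (hf j); case: (sd_f s j) => [[i'|]|] //= _.
    by rewrite (_ : [exists _, _] = true) //; apply/existsP; exists i'.
  by rewrite (_ : [exists _, _] = false) //; apply/negbTE/existsP => [[i']].
Qed.

Lemma main_result : (forall a, exists k, r k = a) ->
  TSD (PW_of R prefW) (PF_of R prefF) Rm = matching_matrix R (SD prefW prefF r).
Proof.
move=> hsurj.
have hu : uniq ([::] ++ map r (enum 'I_(n + m))).
  by rewrite /= map_inj_uniq ?enum_uniq.
have [h1 h2 h3 h4 [h5 h6]] := fold_inv inv_init hu.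
rewrite /TSD /SD -/sdf -/tsf h5; apply: MM_final.
- move=> i; have [k hk] := hsurj (inl i); apply: (h6 (inl i)).
  by rewrite /= -hk map_f ?mem_enum.
- move=> j; have [k hk] := hsurj (inr j); apply: (h6 (inr j)).
  by rewrite /= -hk map_f ?mem_enum.
Qed.

End Main.
Section Step.
Variables (R : realFieldType) (n m : nat).
Variables (prefW : 'I_n -> rel (option 'I_m)) (prefF : 'I_m -> rel (option 'I_n)).
Variable (r : 'I_(n + m) -> 'I_n + 'I_m).
Hypothesis HW : forall i, linear_order (prefW i).
Hypothesis HF : forall j, linear_order (prefF j).

Local Notation Rm := (R_of R r).
Local Notation sstate := (sd_state n m).
Local Notation tstate := (tsd_state R n m).

Lemma relu_ge0 (x : R) : 0 <= x -> relu x = x.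
Proof. by move=> h; rewrite /relu max_l. Qed.
Lemma relu_le0 (x : R) : x <= 0 -> relu x = 0.
Proof. by move=> h; rewrite /relu max_r. Qed.
Lemma relu_b (b : bool) : relu (b%:R : R) = b%:R.
Proof. by apply: relu_ge0; case: b. Qed.
Lemma relu_bm1 (b : bool) : relu (b%:R - 1 : R) = 0.
Proof. by apply: relu_le0; case: b; rewrite ?subrr ?sub0r ?oppr_le0 ?ler01. Qed.

Definition dW k (i : 'I_n) : R := Rm (lshift m i) k.
Definition dF k (j : 'I_m) : R := Rm (rshift n j) k.

Lemma dWE k i : dW k i = (r k == inl i)%:R.
Proof. by rewrite /dW mxE (unsplitK (inl i : 'I_n + 'I_m)). Qed.
Lemma dFE k j : dF k j = (r k == inr j)%:R.
Proof. by rewrite /dF mxE (unsplitK (inr j : 'I_n + 'I_m)). Qed.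

Definition cwO (t : tstate) k := (find_counterpart (\sum_(i < n) dW k i *: ts_PW t i))^T.
Definition cfO (t : tstate) k := (find_counterpart (\sum_(j < m) dF k j *: ts_PF t j))^T.
Definition UWO k := \sum_(q < m) dF k q *: Emat R (lift ord_max q).
Definition UFO k := \sum_(q < n) dW k q *: Emat R (lift ord_max q).

Lemma tsd_PW t k i : ts_PW (tsd_step Rm t k) i =
  (1 - cfO t k 0 (lift ord_max i)) *: map_mx (@relu R) (ts_PW t i + UWO k + Vmat (cwO t k)).
Proof. by []. Qed.
Lemma tsd_PF t k j : ts_PF (tsd_step Rm t k) j =
  (1 - cwO t k 0 (lift ord_max j)) *: map_mx (@relu R) (ts_PF t j + UFO k + Vmat (cfO t k)).
Proof. by []. Qed.
Lemma tsd_M t k : ts_M (tsd_step Rm t k) =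
  ts_M t + (ext0 (dW k))^T *m cwO t k + ((ext0 (dF k))^T *m cfO t k)^T.
Proof. by []. Qed.

Lemma tsd_stepE t k : tsd_step Rm t k =
  TSDState
   (fun i => (1 - cfO t k 0 (lift ord_max i)) *: map_mx (@relu R) (ts_PW t i + UWO k + Vmat (cwO t k)))
   (fun j => (1 - cwO t k 0 (lift ord_max j)) *: map_mx (@relu R) (ts_PF t j + UFO k + Vmat (cfO t k)))
   (ts_M t + (ext0 (dW k))^T *m cwO t k + ((ext0 (dF k))^T *m cfO t k)^T).
Proof. by []. Qed.

Lemma sumW k i0 p q (F : 'I_n -> 'M[R]_(p, q)) : r k = inl i0 ->
  \sum_i dW k i *: F i = F i0.
Proof.
move=> hk; rewrite (bigD1 i0) //= big1 ?addr0.
  by rewrite dWE hk eqxx scale1r.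
move=> i hi; rewrite dWE hk.
by case: eqP => [[e]|]; [move: hi; rewrite e eqxx | rewrite scale0r].
Qed.

Lemma sumW0 k j0 p q (F : 'I_n -> 'M[R]_(p, q)) : r k = inr j0 ->
  \sum_i dW k i *: F i = 0.
Proof. by move=> hk; rewrite big1 // => i _; rewrite dWE hk scale0r. Qed.

Lemma sumF k j0 p q (F : 'I_m -> 'M[R]_(p, q)) : r k = inr j0 ->
  \sum_j dF k j *: F j = F j0.
Proof.
move=> hk; rewrite (bigD1 j0) //= big1 ?addr0.
  by rewrite dFE hk eqxx scale1r.
move=> j hj; rewrite dFE hk.
by case: eqP => [[e]|]; [move: hj; rewrite e eqxx | rewrite scale0r].
Qed.

Lemma sumF0 k i0 p q (F : 'I_m -> 'M[R]_(p, q)) : r k = inl i0 ->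
  \sum_j dF k j *: F j = 0.
Proof. by move=> hk; rewrite big1 // => j _; rewrite dFE hk scale0r. Qed.

Lemma fc0 p q : find_counterpart (0 : 'M[R]_(p, q)) = 0.
Proof. by rewrite /find_counterpart mul0mx. Qed.

Lemma prodE p q (d : 'I_p -> R) (c : 'rV[R]_q.+1) a b :
  ((ext0 d)^T *m c) a b = oapp d 0 (unlift ord_max a) * c 0 b.
Proof. by rewrite !mxE big_ord1 !mxE. Qed.

End Step.
Section Step2.
Variables (R : realFieldType) (n m : nat).
Variables (prefW : 'I_n -> rel (option 'I_m)) (prefF : 'I_m -> rel (option 'I_n)).
Variable (r : 'I_(n + m) -> 'I_n + 'I_m).
Hypothesis HW : forall i, linear_order (prefW i).
Hypothesis HF : forall j, linear_order (prefF j).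
Local Notation Rm := (R_of R r).

Lemma mx0E p q i j : (0 : 'M[R]_(p, q)) i j = 0.
Proof. by rewrite mxE. Qed.

Lemma EmatE s (t a b : 'I_s) : Emat R t a b = if a == t then -1 else 0.
Proof. by rewrite mxE. Qed.

Lemma VmatE s (c : 'rV[R]_s.+1) a b : Vmat c a b = if a == ord_max then 0 else - c 0 a.
Proof. by rewrite mxE. Qed.

Lemma lift_maxF p (j : 'I_p) : (lift ord_max j == ord_max) = false.
Proof. by apply/negbTE; rewrite eq_sym neq_lift. Qed.

Lemma relu_negb (b : bool) : relu (- (b%:R) : R) = 0.
Proof. by apply: relu_le0; rewrite oppr_le0 ler0n. Qed.
Lemma relu0 : relu (0 : R) = 0.
Proof. by apply: relu_le0. Qed.
Lemma lift_eq p (i j : 'I_p) : (lift ord_max i == lift ord_max j :> 'I_p.+1) = (i == j).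
Proof. by rewrite (inj_eq lift_inj). Qed.
Lemma relu_bm1' (b : bool) : relu (b%:R + -1 : R) = 0.
Proof. exact: relu_bm1. Qed.

Lemma stepW_none s t done k i0 :
  Inv prefW prefF s t done -> r k \notin done -> r k = inl i0 -> sd_w s i0 = None ->
  Inv prefW prefF (sdf prefW prefF r s k) (tsd_step Rm t k) (rcons done (r k)).
Proof.
move=> [h1 h2 h3 h4 [h5 h6]] hnd hk hw0.
set x := most_pref (prefW i0) [pred j | sd_f s j == None].
have [xa xb] := most_prefP [pred j | sd_f s j == None] (HW i0).
have esd : sdf prefW prefF r s k =
   SDState (fun i' => if i' == i0 then Some x else sd_w s i')
           (fun j => if x == Some j then Some (Some i0) else sd_f s j).
  by rewrite /sdf hk /= hw0.
have ecw : cwO r t k = (\col_a (unlift ord_max a == x)%:R)^T.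
  by rewrite /cwO (sumW _ hk) h1 // /RW fc_RP.
have ecf : cfO r t k = 0 by rewrite /cfO (sumF0 _ hk) fc0 trmx0.
have eUW : UWO R r k = 0 by rewrite /UWO (sumF0 _ hk).
have eUF : UFO R r k = Emat R (lift ord_max i0) by rewrite /UFO (sumW _ hk).
rewrite esd hk tsd_stepE ecw ecf eUW eUF; split => /=.
- move=> i; case: eqP => // ni hwi.
  rewrite h1 //; apply/matrixP => a c.
  rewrite /RW /RP !mxE subr0 mul1r addr0.
  case: unliftP => [j ->|->]; rewrite ?liftK ?unlift_none /=.
    rewrite lift_maxF [Some j == x]eq_sym.
    by case: (x == Some j); rewrite /= ?relu_bm1 ?oppr0 ?addr0 ?relu_b.
  by rewrite eqxx addr0 relu_b.
- move=> i hn; rewrite mem_rcons inE negb_or => /andP[ni0 nd].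
  have ne : i != i0 by apply: contraNneq ni0 => ->.
  rewrite (negbTE ne) in hn; rewrite h2 //; apply/matrixP => a c.
  rewrite !mxE subr0 mul1r !add0r.
  by case: ifP => _; rewrite ?relu0 ?relu_negb.
- move=> j; case: eqP => // nx hfj.
  rewrite h3 //; apply/matrixP => a c; rewrite /RF /RP !mxE liftK.
  rewrite (_ : (Some j == x) = false); last by apply/negbTE; rewrite eq_sym; apply/eqP.
  rewrite subr0 mul1r oppr0 if_same addr0.
  case: unliftP => [i ->|->]; rewrite ?liftK ?unlift_none /=.
    rewrite lift_eq; case: (i =P i0) => [->|ni]; first by rewrite hw0 eqxx relu_bm1'.
    by rewrite addr0 relu_b.
  by rewrite eq_sym (negbTE (neq_lift _ _)) addr0 relu_b.
- move=> j hn; rewrite mem_rcons inE negb_or => /andP[_ nd].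
  case: (eqVneq x (Some j)) => [ex|nx].
    by apply/matrixP => a c; rewrite !mxE liftK ex eqxx subrr mul0r.
  rewrite (negbTE nx) in hn; rewrite h4 //; apply/matrixP => a c.
  rewrite !mxE liftK (_ : (Some j == x) = false); last by rewrite eq_sym; apply/negbTE.
  rewrite subr0 mul1r add0r oppr0 if_same addr0.
  by case: ifP => _; rewrite ?relu0 // relu_le0 // lerN10.
split.
  rewrite h5 mulmx0 trmx0 addr0; apply/matrixP => a b.
  rewrite mxE prodE /MM !mxE.
  case: (unliftP ord_max a) => [i _|_]; rewrite ?liftK ?unlift_none /=.
    rewrite dWE hk; case: (i =P i0) => [->|ni].
      rewrite hw0 eqxx mul1r.
      case: (unliftP ord_max b) => [j _|_]; rewrite ?liftK ?unlift_none /=.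
        by rewrite add0r; congr (_%:R); rewrite (inj_eq (@Some_inj _)) eq_sym.
      by rewrite add0r; congr (_%:R); rewrite (inj_eq (@Some_inj _)) eq_sym.
    rewrite (_ : (inl i0 == inl i :> 'I_n + 'I_m) = false) ?mul0r ?addr0 //.
    by apply/eqP => [[e]]; apply: ni; rewrite e.
  rewrite mul0r addr0; case: (unliftP ord_max b) => [j _|_] //.
  case: (eqVneq x (Some j)) => [ex|nx]; last by [].
  by move: xa; rewrite -/x ex /= => /eqP ->.
move=> a; rewrite mem_rcons inE => /orP[/eqP ->|ha] /=; first by rewrite eqxx.
move: (h6 a ha); case: a ha => [i|j] _ /=; first by case: (i == i0).
by case: (x == Some j).
Qed.

Lemma stepW_some s t done k i0 :
  Inv prefW prefF s t done -> r k \notin done -> r k = inl i0 -> sd_w s i0 != None ->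
  Inv prefW prefF (sdf prefW prefF r s k) (tsd_step Rm t k) (rcons done (r k)).
Proof.
move=> [h1 h2 h3 h4 [h5 h6]] hnd hk hw0.
have esd : sdf prefW prefF r s k = s.
  by rewrite /sdf hk /=; case: (sd_w s i0) hw0.
have ecw : cwO r t k = 0.
  by rewrite /cwO (sumW _ hk) h2 -?hk // fc0 trmx0.
have ecf : cfO r t k = 0 by rewrite /cfO (sumF0 _ hk) fc0 trmx0.
have eUW : UWO R r k = 0 by rewrite /UWO (sumF0 _ hk).
have eUF : UFO R r k = Emat R (lift ord_max i0) by rewrite /UFO (sumW _ hk).
rewrite esd hk tsd_stepE ecw ecf eUW eUF; split => /=.
- move=> i hwi; rewrite h1 //; apply/matrixP => a c.
  by rewrite /RW /RP !mxE subr0 mul1r oppr0 if_same !addr0 relu_b.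
- move=> i hn; rewrite mem_rcons inE negb_or => /andP[_ nd].
  rewrite h2 //; apply/matrixP => a c.
  by rewrite !mxE subr0 mul1r oppr0 if_same !addr0 relu0.
- move=> j hfj; rewrite h3 //; apply/matrixP => a c; rewrite /RF /RP !mxE.
  rewrite subr0 mul1r oppr0 if_same addr0.
  case: (unliftP ord_max a) => [i ->|->]; rewrite ?liftK ?unlift_none /=.
    rewrite lift_eq; case: (i =P i0) => [->|ni]; last by rewrite addr0 relu_b.
    by rewrite (negbTE hw0) relu_bm1'.
  by rewrite eq_sym (negbTE (neq_lift _ _)) addr0 relu_b.
- move=> j hn; rewrite mem_rcons inE negb_or => /andP[_ nd].
  rewrite h4 //; apply/matrixP => a c.
  rewrite !mxE subr0 mul1r add0r oppr0 if_same addr0.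
  by case: ifP => _; rewrite ?relu0 // relu_le0 // lerN10.
split; first by rewrite h5 !mulmx0 trmx0 !addr0.
move=> a; rewrite mem_rcons inE => /orP[/eqP ->|ha] //.
exact: h6.
Qed.

Lemma stepF_some s t done k j0 :
  Inv prefW prefF s t done -> r k \notin done -> r k = inr j0 -> sd_f s j0 != None ->
  Inv prefW prefF (sdf prefW prefF r s k) (tsd_step Rm t k) (rcons done (r k)).
Proof.
move=> [h1 h2 h3 h4 [h5 h6]] hnd hk hf0.
have esd : sdf prefW prefF r s k = s.
  by rewrite /sdf hk /=; case: (sd_f s j0) hf0.
have ecf : cfO r t k = 0.
  by rewrite /cfO (sumF _ hk) h4 -?hk // fc0 trmx0.
have ecw : cwO r t k = 0 by rewrite /cwO (sumW0 _ hk) fc0 trmx0.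
have eUF : UFO R r k = 0 by rewrite /UFO (sumW0 _ hk).
have eUW : UWO R r k = Emat R (lift ord_max j0) by rewrite /UWO (sumF _ hk).
rewrite esd hk tsd_stepE ecw ecf eUW eUF; split => /=.
- move=> i hwi; rewrite h1 //; apply/matrixP => a c; rewrite /RW /RP !mxE.
  rewrite subr0 mul1r oppr0 if_same addr0.
  case: (unliftP ord_max a) => [j ->|->]; rewrite ?liftK ?unlift_none /=.
    rewrite lift_eq; case: (j =P j0) => [->|nj]; last by rewrite addr0 relu_b.
    by rewrite (negbTE hf0) relu_bm1'.
  by rewrite eq_sym (negbTE (neq_lift _ _)) addr0 relu_b.
- move=> i hn; rewrite mem_rcons inE negb_or => /andP[_ nd].
  rewrite h2 //; apply/matrixP => a c.
  rewrite !mxE subr0 mul1r add0r oppr0 if_same addr0.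
  by case: ifP => _; rewrite ?relu0 // relu_le0 // lerN10.
- move=> j hfj; rewrite h3 //; apply/matrixP => a c.
  by rewrite /RF /RP !mxE subr0 mul1r oppr0 if_same !addr0 relu_b.
- move=> j hn; rewrite mem_rcons inE negb_or => /andP[_ nd].
  rewrite h4 //; apply/matrixP => a c.
  by rewrite !mxE subr0 mul1r oppr0 if_same !addr0 relu0.
split; first by rewrite h5 !mulmx0 trmx0 !addr0.
move=> a; rewrite mem_rcons inE => /orP[/eqP ->|ha] //.
exact: h6.
Qed.

Lemma stepF_none s t done k j0 :
  Inv prefW prefF s t done -> r k \notin done -> r k = inr j0 -> sd_f s j0 = None ->
  Inv prefW prefF (sdf prefW prefF r s k) (tsd_step Rm t k) (rcons done (r k)).
Proof.
move=> [h1 h2 h3 h4 [h5 h6]] hnd hk hf0.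
set y := most_pref (prefF j0) [pred i | sd_w s i == None].
have [ya yb] := most_prefP [pred i | sd_w s i == None] (HF j0).
have esd : sdf prefW prefF r s k =
   SDState (fun i => if y == Some i then Some (Some j0) else sd_w s i)
           (fun j' => if j' == j0 then Some y else sd_f s j').
  by rewrite /sdf hk /= hf0.
have ecf : cfO r t k = (\col_a (unlift ord_max a == y)%:R)^T.
  by rewrite /cfO (sumF _ hk) h3 // /RF fc_RP.
have ecw : cwO r t k = 0 by rewrite /cwO (sumW0 _ hk) fc0 trmx0.
have eUF : UFO R r k = 0 by rewrite /UFO (sumW0 _ hk).
have eUW : UWO R r k = Emat R (lift ord_max j0) by rewrite /UWO (sumF _ hk).
move: ya; rewrite -/y => ya; clear yb; clearbody y.
rewrite esd hk tsd_stepE ecw ecf eUW eUF; split => /=.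
- move=> i; case: eqP => // ny hwi.
  rewrite h1 //; apply/matrixP => a c; rewrite /RW /RP !mxE liftK.
  rewrite (_ : (Some i == y) = false); last by apply/negbTE; rewrite eq_sym; apply/eqP.
  rewrite subr0 mul1r oppr0 if_same addr0.
  case: (unliftP ord_max a) => [j ->|->]; rewrite ?liftK ?unlift_none /=.
    rewrite lift_eq; case: (j =P j0) => [->|nj]; first by rewrite hf0 eqxx relu_bm1'.
    by rewrite addr0 relu_b.
  by rewrite eq_sym (negbTE (neq_lift _ _)) addr0 relu_b.
- move=> i hn; rewrite mem_rcons inE negb_or => /andP[_ nd].
  case: (eqVneq y (Some i)) => [ey|ny].
    by apply/matrixP => a c; rewrite !mxE liftK ey eqxx subrr mul0r.
  rewrite (negbTE ny) in hn; rewrite h2 //; apply/matrixP => a c.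
  rewrite !mxE liftK (_ : (Some i == y) = false); last by rewrite eq_sym; apply/negbTE.
  rewrite subr0 mul1r add0r oppr0 if_same addr0.
  by case: ifP => _; rewrite ?relu0 // relu_le0 // lerN10.
- move=> j; case: eqP => // nj hfj.
  rewrite h3 //; apply/matrixP => a c.
  rewrite /RF /RP !mxE subr0 mul1r addr0.
  case: unliftP => [i ->|->]; rewrite ?liftK ?unlift_none /=.
    rewrite lift_maxF; case: (eqVneq y (Some i)) => [ey|ny].
      by rewrite ?eqxx /= relu_bm1.
    have e1 : (Some i == y) = false by rewrite eq_sym; apply/negbTE.
    by rewrite subr0 relu_b.
  by rewrite eqxx addr0 relu_b.
- move=> j hn; rewrite mem_rcons inE negb_or => /andP[nj0 nd].
  have ne : j != j0 by apply: contraNneq nj0 => ->.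
  rewrite (negbTE ne) in hn; rewrite h4 //; apply/matrixP => a c.
  rewrite !mxE subr0 mul1r !add0r.
  by case: ifP => _; rewrite ?relu0 ?relu_negb.
split.
  rewrite h5 mulmx0 addr0; apply/matrixP => a b.
  rewrite mxE [in X in _ + X = _]mxE prodE /MM !mxE.
  case: (unliftP ord_max b) => [j _|_]; rewrite /= ?dFE ?hk.
    case: (j =P j0) => [->|nj].
      rewrite eqxx mul1r.
      case: (unliftP ord_max a) => [i _|_] /=.
        case: (eqVneq y (Some i)) => [ey|ny].
          move: ya; rewrite ey /= => /eqP ->.
          by rewrite add0r eqxx.
        by rewrite addr0.
      by rewrite hf0 /= (inj_eq (@Some_inj _)) eq_sym add0r.
    rewrite (_ : (inr j0 == inr j :> 'I_n + 'I_m) = false) ?mul0r ?addr0.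
      case: (unliftP ord_max a) => [i _|_] //=.
      case: (eqVneq y (Some i)) => [ey|ny] //.
      move: ya; rewrite ey /= => /eqP ->.
      have -> : (Some (Some j0) == Some (Some j)) = false.
        by apply/eqP => [[e]]; apply: nj; rewrite e.
      by [].
    by apply/eqP => [[e]]; apply: nj; rewrite e.
  rewrite mul0r addr0; case: (unliftP ord_max a) => [i _|_] //=.
  case: (eqVneq y (Some i)) => [ey|ny]; last by [].
  by move: ya; rewrite ey /= => /eqP ->.
move=> a; rewrite mem_rcons inE => /orP[/eqP ->|ha] /=; first by rewrite eqxx.
move: (h6 a ha); case: a ha => [i|j] _ /=; first by case: (y == Some i).
by case: (j == j0).
Qed.

Lemma step_all s t done k : Inv prefW prefF s t done -> r k \notin done ->
  Inv prefW prefF (sdf prefW prefF r s k) (tsd_step Rm t k) (rcons done (r k)).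
Proof.
move=> hI hnd; case E: (r k) => [i0|j0]; rewrite -E.
  case: (eqVneq (sd_w s i0) None) => h.
    exact: (stepW_none hI hnd E h).
  exact: (stepW_some hI hnd E h).
case: (eqVneq (sd_f s j0) None) => h.
  exact: (stepF_none hI hnd E h).
exact: (stepF_some hI hnd E h).
Qed.

End Step2.

Unset Implicit Arguments.
Set Strict Implicit.
Set Printing Implicit Defensive.

Theorem proposition3 (R : realFieldType) (n m : nat)
  (prefW : 'I_n -> rel (option 'I_m)) (prefF : 'I_m -> rel (option 'I_n))
  (r : 'I_(n + m) -> 'I_n + 'I_m) :
  (forall i, linear_order (prefW i)) ->
  (forall j, linear_order (prefF j)) ->
  bijective r ->
  TSD (PW_of R prefW) (PF_of R prefF) (R_of R r)
  = matching_matrix R (SD prefW prefF r).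
Proof.
move=> HW HF [g rg gr].
apply: main_result.
- exact: can_inj rg.
- move=> s t done k; exact: step_all.
- by move=> a; exists (g a).
Qed.
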